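(* Let $\alpha,\beta\in CBV^*[0,1]$ and $v,w\in CBV[0,1]$ satisfy $\alpha[e]=\beta[e]=0$, where $e(t)=1$ for $t\in[0,1]$, and $v(t)+w(t)=1$ for every $t\in[0,1]$. Define $F_1(x)(t)=\alpha[x]v(t)+\beta[x]w(t)$, $t\in[0,1]$. Then $F_1\colon CBV[0,1]\to CBV[0,1]$ is a bounded linear operator with $\|F_1\|\le\|\alpha\|+\|\alpha-\beta\|\cdot\|w\|_{BV}$ and $\|F_1^{n+2}\|\le\|\alpha-\beta\|\cdot|\alpha[v]-\beta[v]|^n\cdot\|\alpha[v]v+\beta[v]w\|_{BV}$ for all $n\ge0$. In particular, the spectral radius satisfies $r(F_1)\le|\alpha[v]-\beta[v]|$.
   Context: $BV[0,1]$ is the Banach space of real functions of bounded (Jordan) variation on $[0,1]$ with norm $\|f\|_{BV}=|f(0)|+\operatorname{var}_{[0,1]}f$, where $\operatorname{var}_{[0,1]}f=\sup\sum_{i=1}^n|f(t_i)-f(t_{i-1})|$ over all finite partitions $0=t_0<\dots<t_n=1$. $CBV[0,1]$ is its closed subspace of continuous functions, and $CBV^*[0,1]$ is its dual, with the operator norm. The norm of $F_1$ is the operator norm on $CBV[0,1]$; $r(A)=\lim_{n\to\infty}\|A^n\|^{1/n}$. By convention $|\alpha[v]-\beta[v]|^0=1$ even if $\alpha[v]-\beta[v]=0$. *)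

(* Defs.v *)
From HB Require Import structures.
From mathcomp Require Import all_boot all_order all_algebra.
From mathcomp Require Import all_classical all_reals all_analysis.
Set Implicit Arguments. Unset Strict Implicit. Unset Printing Implicit Defensive.
Import Order.TTheory GRing.Theory Num.Theory.
Import numFieldNormedType.Exports.
Local Open Scope classical_set_scope.
Local Open Scope ring_scope.

Section Defs.
Variable R : realType.

(** Elements of CBV[0,1]: functions continuous on [0,1] with bounded variation
    on [0,1] (values outside [0,1] are irrelevant). *)
Definition CBV (f : R -> R) : Prop :=
  {within `[0, 1], continuous f} /\ bounded_variation 0 1 f.

Definition var01 (f : R -> R) : R := fine (total_variation 0 1 f).

Definition bvnorm (f : R -> R) : R := `|f 0| + var01 f.

Definition cbv_ball1 : set (R -> R) := [set x | CBV x /\ bvnorm x <= 1].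

Definition is_CBV_dual (alpha : (R -> R) -> R) : Prop :=
  (forall (a : R) (x y : R -> R), CBV x -> CBV y ->
     alpha (fun t => a * x t + y t) = a * alpha x + alpha y) /\
  (exists C : R, forall x, CBV x -> `|alpha x| <= C * bvnorm x).

Definition dual_norm (alpha : (R -> R) -> R) : R :=
  sup [set `|alpha x| | x in cbv_ball1].

Definition is_CBV_bounded_op (T : (R -> R) -> (R -> R)) : Prop :=
  (forall x, CBV x -> CBV (T x)) /\
  (forall (a : R) (x y : R -> R), CBV x -> CBV y ->
     {in `[0, 1], T (fun t => a * x t + y t) =1 (fun t => a * T x t + T y t)}) /\
  (exists C : R, forall x, CBV x -> bvnorm (T x) <= C * bvnorm x).

Definition op_norm (T : (R -> R) -> (R -> R)) : R :=
  sup [set bvnorm (T x) | x in cbv_ball1].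

(** The sequence ||A^n||^(1/n) whose limit is the spectral radius r(A). *)
Definition specrad_seq (T : (R -> R) -> (R -> R)) (n : nat) : R :=
  op_norm (iter n T) `^ (n%:R)^-1.

Definition F1 (alpha beta : (R -> R) -> R) (v w : R -> R) (x : R -> R) : R -> R :=
  fun t => alpha x * v t + beta x * w t.

End Defs.

(* Main.v *)
Require Import Defs.
From HB Require Import structures.
From mathcomp Require Import all_boot all_order all_algebra.
From mathcomp Require Import all_classical all_reals all_analysis.
From mathcomp Require Import ring lra.
Import Order.TTheory GRing.Theory Num.Theory.
Import numFieldNormedType.Exports.
Local Open Scope classical_set_scope.
Local Open Scope ring_scope.
Set Implicit Arguments. Unset Strict Implicit.
Section Aux.
Variable R : realType.
Implicit Types (f g : R -> R) (s : seq R).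

Lemma part_in m s : itv_partition 0 1 s -> nth 1 (0 :: s) m \in `[(0:R), 1].
Proof.
move=> hs; have [ms|ms] := ltnP m (size s).+1.
  by rewrite in_itv /= itv_partition_nth_ge // itv_partition_nth_le.
by rewrite nth_default // in_itv /= ler01 lexx.
Qed.

Lemma variation_eq f g s : {in `[(0:R), 1], f =1 g} -> itv_partition 0 1 s ->
  variation 0 1 f s = variation 0 1 g s.
Proof.
move=> fg hs; rewrite /variation; apply: eq_bigr => k _ /=.
by rewrite !fg //; [exact: (part_in k hs)|exact: (part_in k.+1 hs)].
Qed.

Lemma variations_eq f g : {in `[(0:R), 1], f =1 g} ->
  variations 0 1 f = variations 0 1 g.
Proof.
move=> fg; apply/seteqP; split => _ [s hs <-]; exists s => //.
  by rewrite (variation_eq fg).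
by rewrite (variation_eq fg).
Qed.

Lemma var01_eq f g : {in `[(0:R), 1], f =1 g} -> var01 f = var01 g.
Proof. by move=> fg; rewrite /var01 /total_variation (variations_eq fg). Qed.

Lemma BV_eq f g : {in `[(0:R), 1], f =1 g} -> bounded_variation 0 1 f ->
  bounded_variation 0 1 g.
Proof. by move=> fg; rewrite /bounded_variation (variations_eq fg). Qed.

Lemma bvnorm_eq f g : {in `[(0:R), 1], f =1 g} -> bvnorm f = bvnorm g.
Proof.
move=> fg; rewrite /bvnorm (var01_eq fg) fg //.
by rewrite in_itv /= lexx ler01.
Qed.

Lemma CBV_eq f g : {in `[(0:R), 1], f =1 g} -> CBV f -> CBV g.
Proof.
move=> fg [cf bf]; split; last exact: BV_eq bf.
apply: (subspace_eq_continuous _ cf).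
by move=> x /set_mem xi; apply: fg.
Qed.

Lemma var01E f : bounded_variation 0 1 f -> var01 f = sup (variations 0 1 f).
Proof.
move=> bf; rewrite /var01 /total_variation ereal_sup_EFin //.
exact: variations_neq0 ltr01.
Qed.

Lemma var01_ge0 f : 0 <= var01 f.
Proof. by apply: fine_ge0; apply: total_variation_ge0; exact: ler01. Qed.

Lemma var01_ub f s : bounded_variation 0 1 f -> itv_partition 0 1 s ->
  variation 0 1 f s <= var01 f.
Proof. by move=> bf hs; rewrite var01E //; apply: ub_le_sup => //; exists s. Qed.

Lemma var01_le f M : (forall s, itv_partition 0 1 s -> variation 0 1 f s <= M) ->
  bounded_variation 0 1 f /\ var01 f <= M.
Proof.
move=> h; have bf : bounded_variation 0 1 f by exists M => _ [s hs <-]; apply: h.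
split => //; rewrite var01E //; apply: ge_sup; first exact: variations_neq0 ltr01.
by move=> _ [s hs <-]; apply: h.
Qed.

Lemma variation_comb a f g s :
  variation 0 1 (fun t => a * f t + g t) s <=
  `|a| * variation 0 1 f s + variation 0 1 g s.
Proof.
rewrite /variation mulr_sumr -big_split /=; apply: ler_sum => k _.
rewrite -normrM; apply: le_trans (ler_normD _ _).
by rewrite le_eqVlt; apply/orP; left; apply/eqP; congr `|_|; ring.
Qed.

Lemma variation_scale a f s :
  variation 0 1 (fun t => a * f t) s = `|a| * variation 0 1 f s.
Proof.
rewrite /variation mulr_sumr; apply: eq_bigr => k _ /=.
by rewrite -normrM mulrBr.
Qed.

Lemma variation_cst c s : variation 0 1 (fun _ : R => c) s = 0.
Proof. by rewrite /variation big1 // => k _; rewrite subrr normr0. Qed.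

Lemma comb_BV_le a f g : bounded_variation 0 1 f -> bounded_variation 0 1 g ->
  bounded_variation 0 1 (fun t => a * f t + g t) /\
  var01 (fun t => a * f t + g t) <= `|a| * var01 f + var01 g.
Proof.
move=> bf bg; apply: var01_le => s hs; apply: le_trans (variation_comb _ _ _ _) _.
by apply: lerD; [apply: ler_wpM2l => //; apply: var01_ub|apply: var01_ub].
Qed.

Lemma var01_scale a f : bounded_variation 0 1 f ->
  bounded_variation 0 1 (fun t => a * f t) /\
  var01 (fun t => a * f t) = `|a| * var01 f.
Proof.
move=> bf.
have [bs le1] : bounded_variation 0 1 (fun t => a * f t) /\
    var01 (fun t => a * f t) <= `|a| * var01 f.
  apply: var01_le => s hs; rewrite variation_scale.
  by apply: ler_wpM2l => //; apply: var01_ub.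
split => //; apply: le_anti; rewrite le1 /=.
have [->|a0] := eqVneq a 0; first by rewrite normr0 mul0r var01_ge0.
have na : 0 < `|a| by rewrite normr_gt0.
rewrite mulrC -ler_pdivlMr //.
have h : forall s, itv_partition 0 1 s ->
    variation 0 1 f s <= var01 (fun t => a * f t) / `|a|.
  move=> s hs; rewrite ler_pdivlMr // mulrC -variation_scale.
  exact: var01_ub.
by have [_ ->] := var01_le h.
Qed.

Lemma var01_cst c : var01 (fun _ : R => c) = 0.
Proof.
apply: le_anti; rewrite var01_ge0 andbT.
have h : forall s, itv_partition 0 1 s -> variation 0 1 (fun _ => c) s <= 0.
  by move=> s _; rewrite variation_cst.
by have [_ ->] := var01_le h.
Qed.

Lemma BV_cst c : bounded_variation 0 1 (fun _ : R => c).
Proof.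
have h : forall s, itv_partition 0 1 s -> variation 0 1 (fun _ => c) s <= 0.
  by move=> s _; rewrite variation_cst.
by have [] := var01_le h.
Qed.

Lemma bvnorm_ge0 f : 0 <= bvnorm f.
Proof. by rewrite /bvnorm addr_ge0 // var01_ge0. Qed.

Lemma bvnorm_comb a f g : bounded_variation 0 1 f -> bounded_variation 0 1 g ->
  bvnorm (fun t => a * f t + g t) <= `|a| * bvnorm f + bvnorm g.
Proof.
move=> bf bg; have [_ h] := comb_BV_le a bf bg.
rewrite /bvnorm mulrDr addrACA; apply: lerD => //.
by rewrite -normrM ler_normD.
Qed.

Lemma bvnorm_scale a f : bounded_variation 0 1 f ->
  bvnorm (fun t => a * f t) = `|a| * bvnorm f.
Proof. by move=> bf; have [_ h] := var01_scale a bf; rewrite /bvnorm h normrM mulrDr. Qed.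

Lemma bvnorm_cst c : bvnorm (fun _ : R => c) = `|c|.
Proof. by rewrite /bvnorm var01_cst addr0. Qed.

Lemma CBV_comb a f g : CBV f -> CBV g -> CBV (fun t => a * f t + g t).
Proof.
move=> [cf bf] [cg bg]; split; last by case: (comb_BV_le a bf bg).
move=> x.
have h1 : {for x, continuous (fun t : subspace `[(0:R), 1] => a * f t)}.
  apply: (@continuousM _ _ (fun=> a) (f : subspace `[(0:R), 1] -> R)); last exact: cf.
  exact: cst_continuous.
exact: (@continuousD _ _ _ (fun t : subspace `[(0:R), 1] => a * f t)
   (g : subspace `[(0:R), 1] -> R) x h1 (cg x)).
Qed.

Lemma CBV_cst c : CBV (fun _ : R => c).
Proof. split; last exact: BV_cst. by move=> x; exact: cst_continuous. Qed.

Lemma CBV_scale a f : CBV f -> CBV (fun t => a * f t).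
Proof.
move=> cf; apply: (CBV_eq _ (CBV_comb a cf (CBV_cst 0))).
by move=> t _; rewrite addr0.
Qed.

End Aux.
Section Dual.
Variable R : realType.
Implicit Types (f g x y : R -> R) (al be : (R -> R) -> R).

Lemma ball0 : (@cbv_ball1 R) (fun _ : R => 0).
Proof. by split; [exact: CBV_cst|rewrite bvnorm_cst normr0 ler01]. Qed.

Lemma dual_eq al x y : is_CBV_dual al -> CBV x -> CBV y ->
  {in `[(0:R), 1], x =1 y} -> al x = al y.
Proof.
move=> [lin [C hC]] cx cy xy.
have cz := CBV_comb (-1) cy cx.
have h := lin (-1) y x cy cx.
have hz : bvnorm (fun t => -1 * y t + x t) = 0.
  rewrite (@bvnorm_eq _ _ (fun _ => 0)) ?bvnorm_cst ?normr0 //.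
  by move=> t ti; rewrite xy // mulN1r addNr.
have := hC _ cz; rewrite hz mulr0 normr_le0 h => /eqP; lra.
Qed.

Lemma dual0 al : is_CBV_dual al -> al (fun _ => 0) = 0.
Proof.
move=> [lin _]; have := lin 1 (fun _ => 0) (fun _ => 0) (CBV_cst _) (CBV_cst _).
have -> : (fun t : R => 1 * (fun _ : R => (0:R)) t + (fun _ : R => (0:R)) t) = fun _ => 0.
  by apply: funext => t; rewrite mulr0 addr0.
lra.
Qed.

Lemma dual_scale al a x : is_CBV_dual al -> CBV x -> al (fun t => a * x t) = a * al x.
Proof.
move=> d cx; have := d.1 a x (fun _ => 0) cx (CBV_cst _).
have -> : (fun t : R => a * x t + (fun _ : R => 0) t) = fun t => a * x t.
  by apply: funext => t; rewrite addr0.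
by rewrite dual0 // addr0.
Qed.

Lemma dual_bnd al : is_CBV_dual al ->
  exists C, 0 <= C /\ forall x, CBV x -> `|al x| <= C * bvnorm x.
Proof.
move=> [_ [C hC]]; exists (Num.max C 0); split; first by rewrite le_max lexx orbT.
move=> x cx; apply: le_trans (hC _ cx) _; apply: ler_wpM2r; first exact: bvnorm_ge0.
by rewrite le_max lexx.
Qed.

Lemma dual_hasub al : is_CBV_dual al ->
  has_ubound [set `|al x| | x in (@cbv_ball1 R)].
Proof.
move=> /dual_bnd [C [C0 hC]]; exists C => _ [x [cx nx] <-].
apply: le_trans (hC _ cx) _; rewrite -[leRHS]mulr1; exact: ler_wpM2l.
Qed.

Lemma dual_ub al x : is_CBV_dual al -> (@cbv_ball1 R) x -> `|al x| <= dual_norm al.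
Proof. by move=> d bx; apply: ub_le_sup; [exact: dual_hasub|exists x]. Qed.

Lemma dual_norm_ge0 al : is_CBV_dual al -> 0 <= dual_norm al.
Proof. by move=> d; apply: le_trans (dual_ub d ball0); rewrite normr_ge0. Qed.

Lemma dual_sub al be : is_CBV_dual al -> is_CBV_dual be ->
  is_CBV_dual (fun x => al x - be x).
Proof.
move=> da db; split.
  by move=> a x y cx cy; rewrite da.1 // db.1 //; ring.
have [C1 [_ h1]] := dual_bnd da; have [C2 [_ h2]] := dual_bnd db.
exists (C1 + C2) => x cx; apply: le_trans (ler_normB _ _) _.
by rewrite mulrDl lerD // ?h1 ?h2.
Qed.

Lemma dual_e al v w : is_CBV_dual al -> CBV v -> CBV w ->
  al (fun _ => 1) = 0 -> (forall t, t \in `[(0:R), 1] -> v t + w t = 1) ->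
  al w = - al v.
Proof.
move=> d cv cw ae vw.
have h : al (fun _ => 1) = al (fun t => 1 * v t + w t).
  apply: dual_eq d (CBV_cst 1) (CBV_comb 1 cv cw) _.
  by move=> t ti; rewrite mul1r vw.
move: h; rewrite d.1 // ae; lra.
Qed.

Lemma sup_mulr (B : set (R -> R)) (G : (R -> R) -> R) K :
  B !=set0 -> has_ubound [set G x | x in B] -> 0 <= K ->
  sup [set G x * K | x in B] = sup [set G x | x in B] * K.
Proof.
move=> [x0 Bx0] hub K0.
have ne : [set G x | x in B] !=set0 by exists (G x0), x0.
have ne' : [set G x * K | x in B] !=set0 by exists (G x0 * K), x0.
have ub' : ubound [set G x * K | x in B] (sup [set G x | x in B] * K).
  move=> _ [x Bx <-]; apply: ler_wpM2r => //.
  by apply: ub_le_sup => //; exists x.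
apply: le_anti; rewrite ge_sup //=.
have hub' : has_ubound [set G x * K | x in B] by exists (sup [set G x | x in B] * K).
have [->|Kn] := eqVneq K 0.
  rewrite mulr0.
  have hz : has_ubound [set G x * 0 | x in B] by exists 0 => _ [x _ <-]; rewrite mulr0.
  apply: (@le_trans _ _ (G x0 * 0)); first by rewrite mulr0.
  by apply: ub_le_sup => //; exists x0.
have Kp : 0 < K by rewrite lt_def Kn K0.
rewrite -ler_pdivlMr //; apply: ge_sup => // _ [x Bx <-].
by rewrite ler_pdivlMr //; apply: ub_le_sup => //; exists x.
Qed.

End Dual.
Lemma inv_nat2_cvg (R : realType) :
  ((n.+2%:R : R)^-1) @[n --> \oo] --> (0 : R).
Proof.
have h := @cvg_harmonic R; rewrite -cvg_shiftS in h.
exact: h.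
Qed.

Lemma root_cvg (R : realType) (a b : R) : 0 <= a -> 0 <= b ->
  exists2 L, ((a * b ^+ n) `^ (n.+2%:R)^-1) @[n --> \oo] --> L & L <= b.
Proof.
move=> a0 b0.
have ne n : (n.+2%:R : R)^-1 != 0 by rewrite invr_eq0 pnatr_eq0.
have [az|an] := eqVneq a 0.
  exists 0 => //.
  have -> : (fun n : nat => (a * b ^+ n) `^ (n.+2%:R)^-1) = fun=> 0.
    by apply: funext => n; rewrite az mul0r powR0.
  exact: cvg_cst.
have [bz|bn] := eqVneq b 0.
  exists 0; last by rewrite bz.
  rewrite -cvg_shiftS /=.
  have -> : (fun n : nat => (a * b ^+ n.+1) `^ (n.+3%:R)^-1) = fun=> 0.
    by apply: funext => n; rewrite bz expr0n /= mulr0 powR0.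
  exact: cvg_cst.
have ap : 0 < a by rewrite lt_def an a0.
have bp : 0 < b by rewrite lt_def bn b0.
exists b => //.
have h2 : (ln b + (n.+2%:R)^-1 * (ln a - 2 * ln b)) @[n --> \oo] --> ln b.
  rewrite -[X in _ --> X]addr0.
  apply: cvgD; first exact: cvg_cst.
  rewrite -(mul0r (ln a - 2 * ln b)).
  by apply: cvgMl; exact: inv_nat2_cvg.
have := continuous_cvg _ (@continuous_expR R (ln b)) h2.
rewrite lnK ?posrE //.
have -> : (fun n : nat => (a * b ^+ n) `^ (n.+2%:R)^-1) =
   (expR \o (fun n : nat => ln b + (n.+2%:R)^-1 * (ln a - 2 * ln b))).
  apply: funext => n /=.
  rewrite /powR ifF; last by apply/negbTE; rewrite mulf_neq0 // expf_neq0.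
  rewrite lnM ?posrE ?exprn_gt0 // lnXn //; congr expR.
  have nz : (n.+2%:R : R) != 0 by rewrite pnatr_eq0.
  rewrite -mulr_natr; field => //.
by move=> h; apply: h.
Qed.
Unset Implicit Arguments.

Theorem lemma4p3 (R : realType) (alpha beta : (R -> R) -> R) (v w : R -> R) :
  is_CBV_dual alpha -> is_CBV_dual beta -> CBV v -> CBV w ->
  alpha (fun _ => 1) = 0 -> beta (fun _ => 1) = 0 ->
  (forall t, t \in `[0, 1] -> v t + w t = 1) ->
  [/\ is_CBV_bounded_op (F1 alpha beta v w),
      op_norm (F1 alpha beta v w) <=
        dual_norm alpha + dual_norm (fun x => alpha x - beta x) * bvnorm w,
      (forall n : nat,
        op_norm (iter n.+2 (F1 alpha beta v w)) <=
          dual_norm (fun x => alpha x - beta x) * `|alpha v - beta v| ^+ n *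
          bvnorm (fun t => alpha v * v t + beta v * w t)),
      cvgn (specrad_seq (F1 alpha beta v w)) &
      limn (specrad_seq (F1 alpha beta v w)) <= `|alpha v - beta v| ].
Proof.
move=> ha hb cv cw ae be vw.
set F := F1 alpha beta v w.
set u := fun t => alpha v * v t + beta v * w t.
set c := alpha v - beta v.
have hd := dual_sub ha hb.
set d := fun x => alpha x - beta x.
have aw := dual_e ha cv cw ae vw.
have bw := dual_e hb cv cw be vw.
have cu : CBV u := CBV_comb _ cv (CBV_scale _ cw).
have CF x : CBV x -> CBV (F x) by move=> _; exact: CBV_comb _ cv (CBV_scale _ cw).
have au : alpha u = alpha v * c.
  rewrite /u (ha.1 (alpha v) v (fun t => beta v * w t)) //; last exact: CBV_scale.
  by rewrite dual_scale // aw /c; ring.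
have bu : beta u = beta v * c.
  rewrite /u (hb.1 (alpha v) v (fun t => beta v * w t)) //; last exact: CBV_scale.
  by rewrite dual_scale // bw /c; ring.
have Fk k : F (fun t => k * u t) = fun t => (k * c) * u t.
  apply: funext => t; rewrite /F /F1 !dual_scale // au bu /u; ring.
have F2 x : CBV x -> F (F x) = fun t => d x * u t.
  move=> cx; apply: funext => t; rewrite {1}/F /F1.
  have e1 : alpha (F x) = d x * alpha v.
    rewrite /F /F1 (ha.1 (alpha x) v (fun t => beta x * w t)) //; last exact: CBV_scale.
    by rewrite dual_scale // aw /d; ring.
  have e2 : beta (F x) = d x * beta v.
    rewrite /F /F1 (hb.1 (alpha x) v (fun t => beta x * w t)) //; last exact: CBV_scale.
    by rewrite dual_scale // bw /d; ring.
  by rewrite e1 e2 /u; ring.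
have iterF n x : CBV x -> iter n.+2 F x = fun t => (d x * c ^+ n) * u t.
  move=> cx; elim: n => [|n IH].
    by rewrite /= F2 //; apply: funext => t; rewrite expr0 mulr1.
  rewrite iterS IH Fk; apply: funext => t; by rewrite exprSr mulrA.
have ne : (@cbv_ball1 R) !=set0 by exists (fun _ => 0); exact: ball0.
have On n : op_norm (iter n.+2 F) = dual_norm d * `|c| ^+ n * bvnorm u.
  rewrite /op_norm.
  rewrite (@eq_imagel _ _ _ _ (fun x => `|d x| * (`|c| ^+ n * bvnorm u))); last first.
    move=> x [cx _]; rewrite iterF // bvnorm_scale; last exact: cu.2.
    by rewrite normrM normrX mulrA.
  rewrite sup_mulr //; last by rewrite mulr_ge0 ?exprn_ge0 ?bvnorm_ge0.
    by rewrite /dual_norm mulrA.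
  exact: dual_hasub.
have [L hL Lc] := root_cvg (mulr_ge0 (dual_norm_ge0 hd) (bvnorm_ge0 u)) (normr_ge0 c).
have hS : specrad_seq F @ \oo --> L.
  rewrite -(cvg_shiftn 2) /=.
  have -> : (fun n => specrad_seq F (n + 2)) =
      (fun n : nat => (dual_norm d * bvnorm u * `|c| ^+ n) `^ (n.+2%:R)^-1).
    apply: funext => n; rewrite /specrad_seq addn2 On; congr (_ `^ _).
    by rewrite mulrAC.
  exact: hL.
split.
- split; first exact: CF.
  split.
    move=> a x y cx cy t _; rewrite /F /F1 ha.1 // hb.1 //; ring.
  have [Ca [Ca0 hCa]] := dual_bnd ha; have [Cb [Cb0 hCb]] := dual_bnd hb.
  exists (Ca * bvnorm v + Cb * bvnorm w) => x cx.
  have sw := (CBV_scale (beta x) cw).2.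
  apply: le_trans (bvnorm_comb (alpha x) cv.2 sw) _.
  rewrite bvnorm_scale; last exact: cw.2.
  rewrite mulrDl; apply: lerD.
    rewrite mulrAC; apply: ler_wpM2r; [exact: bvnorm_ge0|exact: hCa].
  rewrite mulrAC; apply: ler_wpM2r; [exact: bvnorm_ge0|exact: hCb].
- rewrite /op_norm; apply: ge_sup.
    by case: ne => x0 bx0; exists (bvnorm (F x0)), x0.
  move=> _ [x [cx nx] <-].
  rewrite (@bvnorm_eq _ (F x) (fun t => (- d x) * w t + alpha x)); last first.
    move=> t ti; rewrite /F /F1 /d.
    have -> : v t = 1 - w t by rewrite -(vw t ti); ring.
    ring.
  apply: le_trans (bvnorm_comb _ cw.2 (BV_cst _)) _.
  rewrite bvnorm_cst normrN addrC; apply: lerD.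
    exact: dual_ub.
  apply: ler_wpM2r; first exact: bvnorm_ge0.
  exact: (dual_ub hd).
- by move=> n; rewrite On.
- exact: cvgP hS.
- by rewrite (cvg_lim _ hS).
Qed.
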